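(* Let $E$ be an arbitrary directed graph. Then every descending chain $U_1\supseteq U_2\supseteq\cdots$ of compact open invariant subsets of $G_E^{(0)}$ stabilizes. Moreover, every nonempty compact open invariant subset of $G_E^{(0)}$ contains a minimal one, i.e. a nonempty compact open invariant subset containing no strictly smaller nonempty compact open invariant subset.
   Context: For a directed graph $E$ (paths $\mu=\mu_1\cdots\mu_n$ with $r(\mu_i)=s(\mu_{i+1})$, $|\mu|=n$, $\mathrm{Path}(E)$ the finite paths including vertices, $E^\infty$ infinite paths, sinks = vertices emitting no edges, $\mathrm{Inf}(E)$ = vertices emitting infinitely many edges), let $X=E^\infty\cup\{\mu\in\mathrm{Path}(E): r(\mu)\text{ a sink}\}\cup\{\mu: r(\mu)\in\mathrm{Inf}(E)\}$ and $G_E=\{(\alpha x,|\alpha|-|\beta|,\beta x):\alpha,\beta\in\mathrm{Path}(E),x\in X,r(\alpha)=r(\beta)=s(x)\}$, with product $(x,k,y)(y,l,z)=(x,k+l,z)$, inverse $(y,-k,x)$, range $(x,0,x)$, source $(y,0,y)$; unit space $G_E^{(0)}=\{(x,0,x)\}\cong X$, topologized by the basis of compact open sets $Z(\mu)\setminus\bigcup_{e\in F}Z(\mu e)$ with $Z(\mu)=\{\mu x:x\in X,s(x)=r(\mu)\}$ and $F\subseteq s^{-1}(r(\mu))$ finite. $U\subseteq G_E^{(0)}$ is invariant if for every $\gamma\in G_E$, $s(\gamma)\in U$ iff $r(\gamma)\in U$. *)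

(* Defs.v *)
From Stdlib Require Import List ZArith Arith.
Import ListNotations.
Set Implicit Arguments.

Record graph : Type := Graph {
  V : Type;
  Ed : Type;
  src : Ed -> V;
  rng : Ed -> V }.

Arguments src {g} _.
Arguments rng {g} _.
Section G.
Variable E : graph.

(* A finite path is a start vertex v together with a list of edges es
   (the vertex v itself is the path of length 0). *)
Fixpoint fpath_ok (v : V E) (es : list (Ed E)) : Prop :=
  match es with
  | [] => True
  | e :: es' => src e = v /\ fpath_ok (rng e) es'
  end.

Fixpoint fend (v : V E) (es : list (Ed E)) : V E :=
  match es with
  | [] => v
  | e :: es' => fend (rng e) es'
  end.

Definition is_sink (v : V E) : Prop := forall e : Ed E, src e <> v.

Definition inf_emitter (v : V E) : Prop :=
  ~ exists l : list (Ed E), forall e, src e = v -> In e l.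

(* Candidate points of the boundary path space: finite or infinite paths. *)
Inductive bpath : Type :=
| Fin : V E -> list (Ed E) -> bpath
| Inf : (nat -> Ed E) -> bpath.

Definition in_X (b : bpath) : Prop :=
  match b with
  | Fin v es => fpath_ok v es /\ (is_sink (fend v es) \/ inf_emitter (fend v es))
  | Inf x => forall n, rng (x n) = src (x (S n))
  end.

Definition bsrc (b : bpath) : V E :=
  match b with
  | Fin v _ => v
  | Inf x => src (x 0)
  end.

Definition prepend (v : V E) (es : list (Ed E)) (b : bpath) : bpath :=
  match b with
  | Fin _ fs => Fin v (es ++ fs)
  | Inf x => Inf (fun n => match nth_error es n with
                           | Some e => e
                           | None => x (n - length es)
                           end)
  end.

Definition in_GE (x : bpath) (k : Z) (y : bpath) : Prop :=
  exists (va : V E) (a : list (Ed E)) (vb : V E) (b : list (Ed E)) (z : bpath),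
    fpath_ok va a /\ fpath_ok vb b /\ in_X z /\
    fend va a = bsrc z /\ fend vb b = bsrc z /\
    x = prepend va a z /\ y = prepend vb b z /\
    k = (Z.of_nat (length a) - Z.of_nat (length b))%Z.

(* subsets of G_E^(0) ≅ X are predicates on bpath, considered on X *)
Definition subsetX (A B : bpath -> Prop) : Prop :=
  forall x, in_X x -> A x -> B x.

Definition nonemptyX (A : bpath -> Prop) : Prop := exists x, in_X x /\ A x.

(* invariance: for γ = (x,k,y), r(γ) = x, s(γ) = y *)
Definition invariant (U : bpath -> Prop) : Prop :=
  forall x k y, in_GE x k y -> (U y <-> U x).

Definition cyl (v : V E) (es : list (Ed E)) (b : bpath) : Prop :=
  exists z, in_X z /\ bsrc z = fend v es /\ b = prepend v es z.

Definition basic (v : V E) (es : list (Ed E)) (F : list (Ed E)) (b : bpath) : Prop :=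
  cyl v es b /\ forall e, In e F -> ~ cyl v (es ++ [e]) b.

Definition basic_ok (v : V E) (es : list (Ed E)) (F : list (Ed E)) : Prop :=
  fpath_ok v es /\ forall e, In e F -> src e = fend v es.

Definition openX (U : bpath -> Prop) : Prop :=
  forall x, in_X x -> U x ->
    exists v es F, basic_ok v es F /\ basic v es F x /\ subsetX (basic v es F) U.

Definition compactX (U : bpath -> Prop) : Prop :=
  forall (I : Type) (O : I -> bpath -> Prop),
    (forall i, openX (O i)) ->
    (forall x, in_X x -> U x -> exists i, O i x) ->
    exists l : list I, forall x, in_X x -> U x -> exists i, In i l /\ O i x.

Definition coi (U : bpath -> Prop) : Prop :=
  compactX U /\ openX U /\ invariant U.

Definition minimal_coi (W : bpath -> Prop) : Prop :=
  nonemptyX W /\ coi W /\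
  forall W', nonemptyX W' -> coi W' -> subsetX W' W -> subsetX W W'.

End G.

(* Main.v *)
Require Import Defs.
From Stdlib Require Import List ZArith Arith Lia Classical ClassicalEpsilon FunctionalExtensionality.
Import ListNotations.
Local Arguments fpath_ok {E} v es.
Local Arguments fend {E} v es.
Local Arguments Fin {E} _ _.
Local Arguments Inf {E} _.
Local Arguments is_sink {E} v.
Local Arguments inf_emitter {E} v.

Lemma prepend_nil {E : graph} (v : V E) (z : bpath E) : bsrc z = v -> prepend v [] z = z.
Proof.
  destruct z as [w fs|x]; simpl; intros H.
  - subst; reflexivity.
  - f_equal; apply functional_extensionality; intro n.
    destruct n; simpl; f_equal; lia.
Qed.

Lemma prepend_app {E : graph} (v u : V E) a b (z : bpath E) :
  prepend v (a ++ b) z = prepend v a (prepend u b z).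
Proof.
  destruct z as [w fs|x]; simpl.
  - rewrite app_assoc; reflexivity.
  - f_equal; apply functional_extensionality; intro n.
    destruct (Nat.lt_ge_cases n (length a)) as [Hl|Hl].
    + rewrite nth_error_app1 by lia.
      destruct (nth_error a n) eqn:Hn; [reflexivity|].
      apply nth_error_None in Hn; lia.
    + rewrite nth_error_app2 by lia.
      assert (nth_error a n = None) as -> by (apply nth_error_None; lia).
      destruct (nth_error b (n - length a)); [reflexivity|].
      rewrite length_app; f_equal; lia.
Qed.

Lemma fpath_ok_app {E : graph} (v : V E) a b :
  fpath_ok v (a ++ b) <-> fpath_ok v a /\ fpath_ok (fend v a) b.
Proof.
  revert v; induction a as [|e a IH]; intro v; simpl.
  - tauto.
  - rewrite IH; tauto.
Qed.

Lemma fend_app {E : graph} (v : V E) a b : fend v (a ++ b) = fend (fend v a) b.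
Proof. revert v; induction a; intro v; simpl; auto. Qed.

Lemma bsrc_prepend {E : graph} (v : V E) a z :
  fpath_ok v a -> fend v a = bsrc z -> bsrc (prepend v a z) = v.
Proof.
  destruct z as [w fs|x]; simpl; auto.
  destruct a as [|e a]; simpl; intros H1 H2.
  - auto.
  - tauto.
Qed.

Lemma in_X_prepend1 {E : graph} (e : Ed E) z :
  rng e = bsrc z -> in_X z -> in_X (prepend (src e) [e] z).
Proof.
  destruct z as [w fs|x]; simpl; intros H1 H2.
  - subst; tauto.
  - intro n; destruct n as [|n]; simpl.
    + rewrite H1; reflexivity.
    + destruct n; simpl; rewrite ?Nat.sub_0_r; auto.
Qed.

Lemma in_X_prepend {E : graph} (a : list (Ed E)) : forall (va : V E) z,
  fpath_ok va a -> fend va a = bsrc z -> in_X z -> in_X (prepend va a z).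
Proof.
  induction a as [|e a IH]; intros va z H1 H2 H3.
  - simpl in H2; rewrite prepend_nil; auto.
  - simpl in H1, H2; destruct H1 as [Hs H1].
    change (e :: a) with ([e] ++ a).
    rewrite (prepend_app va (rng e)).
    subst va. apply in_X_prepend1.
    + rewrite bsrc_prepend; auto.
    + apply IH; auto.
Qed.

Lemma inv_step {E : graph} (U : bpath E -> Prop) va a z :
  invariant U -> fpath_ok va a -> in_X z -> fend va a = bsrc z ->
  (U z <-> U (prepend va a z)).
Proof.
  intros HU Hok Hz He.
  apply (HU (prepend va a z) (Z.of_nat (length a) - Z.of_nat (length (@nil (Ed E))))%Z z).
  exists va, a, (bsrc z), [], z.
  repeat split; auto.
  symmetry; apply prepend_nil; reflexivity.
Qed.

Lemma edge_eq {E : graph} (v : V E) es e1 e2 z1 z2 :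
  prepend v (es ++ [e1]) z1 = prepend v (es ++ [e2]) z2 -> e1 = e2.
Proof.
  destruct z1 as [w1 fs1|g1]; destruct z2 as [w2 fs2|g2]; simpl; intro H;
    try discriminate; injection H; intro H'.
  - rewrite <- !app_assoc in H'; simpl in H'.
    apply app_inv_head in H'; injection H'; auto.
  - apply (f_equal (fun h => h (length es))) in H'.
    rewrite !nth_error_app2 in H' by lia.
    rewrite Nat.sub_diag in H'; simpl in H'; auto.
Qed.

Definition DV {E : graph} (U : bpath E -> Prop) (w : V E) : Prop :=
  forall y, in_X y -> bsrc y = w -> U y.

Lemma cover {E : graph} (U : bpath E -> Prop) :
  compactX U -> exists S, forall x, in_X x -> U x -> In (bsrc x) S.
Proof.
  intro HC.
  destruct (HC (V E) (fun v b => bsrc b = v)) as [l Hl].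
  - intros v x Hx Hv. exists v, [], []. split; [split; simpl; tauto|]. split.
    + split; [|simpl; tauto]. exists x; repeat split; auto.
      symmetry; apply prepend_nil; auto.
    + intros b Hb [[z [Hz [Hs ->]]] _]. apply bsrc_prepend; simpl; auto.
  - intros x _ _. exists (bsrc x); reflexivity.
  - exists l. intros x Hx Hu. destruct (Hl x Hx Hu) as [i [Hi Hi']]. subst; auto.
Qed.

Lemma key {E : graph} (V1 V2 : bpath E -> Prop) SL :
  openX V1 -> invariant V1 -> invariant V2 ->
  (forall x, in_X x -> V1 x -> In (bsrc x) SL) ->
  (forall w, In w SL -> in_X (Fin w []) -> V1 (Fin w []) -> V2 (Fin w [])) ->
  (forall w, In w SL -> DV V1 w -> DV V2 w) ->
  subsetX V1 V2.
Proof.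
  intros Ho Hi1 Hi2 HS H1 H2 x Hx Hv.
  destruct x as [v es|f].
  - destruct Hx as [Hok Hend].
    set (w := fend v es).
    assert (Hxe : Fin v es = prepend v es (Fin w [])) by (simpl; rewrite app_nil_r; reflexivity).
    assert (HwX : in_X (Fin w [])) by (simpl; tauto).
    assert (Hw1 : V1 (Fin w [])).
    { apply (proj2 (inv_step V1 v es (Fin w []) Hi1 Hok HwX eq_refl)). rewrite <- Hxe; auto. }
    assert (HwS : In w SL) by (apply (HS _ HwX Hw1)).
    rewrite Hxe. apply (proj1 (inv_step V2 v es (Fin w []) Hi2 Hok HwX eq_refl)).
    auto.
  - destruct (Ho _ Hx Hv) as [v [es [F [[Hok HF] [[Hcyl Hnot] Hsub]]]]].
    destruct Hcyl as [z [Hz [Hbz Hxz]]].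
    destruct z as [w fs|g]; [discriminate|].
    set (z' := Inf (fun m => g (S m))).
    assert (Ha : Inf g = prepend (src (g 0)) [g 0] z').
    { simpl. f_equal. apply functional_extensionality; intro n.
      destruct n as [|n]; [reflexivity|]; destruct n; reflexivity. }
    assert (Hb : in_X z') by (intro n; apply (Hz (S n))).
    assert (Hc : bsrc z' = rng (g 0)) by (simpl; symmetry; apply Hz).
    assert (Hd : src (g 0) = fend v es) by exact Hbz.
    assert (He : Inf f = prepend v (es ++ [g 0]) z').
    { rewrite Hxz, (prepend_app v (src (g 0))), <- Ha; reflexivity. }
    assert (Hf : fpath_ok v (es ++ [g 0])).
    { apply fpath_ok_app; split; auto. simpl; auto. }
    assert (Hf' : fend v (es ++ [g 0]) = rng (g 0)) by (rewrite fend_app; reflexivity).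
    assert (HD : DV V1 (rng (g 0))).
    { intros y Hy Hys.
      assert (Hy'X : in_X (prepend v (es ++ [g 0]) y)).
      { apply in_X_prepend; auto; congruence. }
      assert (HV : V1 (prepend v (es ++ [g 0]) y)).
      { apply Hsub; auto. split.
        - exists (prepend (src (g 0)) [g 0] y). split; [apply in_X_prepend1; auto; congruence|].
          split.
          + rewrite bsrc_prepend; simpl; auto.
          + apply prepend_app.
        - intros e0 He0 [z2 [_ [_ Heq]]].
          apply edge_eq in Heq. subst e0.
          apply (Hnot (g 0) He0). exists z'. repeat split; auto. congruence. }
      apply (proj2 (inv_step V1 v (es ++ [g 0]) y Hi1 Hf Hy ltac:(congruence))); auto. }
    assert (Hz'1 : V1 z') by (apply HD; auto).
    assert (HSw : In (rng (g 0)) SL) by (rewrite <- Hc; apply HS; auto).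
    assert (Hz'2 : V2 z') by (apply (H2 _ HSw HD); auto).
    rewrite He. apply (proj1 (inv_step V2 v (es ++ [g 0]) z' Hi2 Hf Hb ltac:(congruence))); auto.
Qed.

Definition bit (P : Prop) : nat := if excluded_middle_informative P then 1 else 0.

Lemma bit_le (P Q : Prop) : (P -> Q) -> bit P <= bit Q.
Proof.
  unfold bit; intro H; destruct (excluded_middle_informative P); destruct (excluded_middle_informative Q); tauto || lia.
Qed.

Lemma bit_eq (P Q : Prop) : bit P = bit Q -> Q -> P.
Proof.
  unfold bit; destruct (excluded_middle_informative P); destruct (excluded_middle_informative Q); intros; auto; try lia; contradiction.
Qed.

Definition meas {E : graph} (SL : list (V E)) (U : bpath E -> Prop) : nat :=
  list_sum (map (fun w => bit (in_X (Fin w []) /\ U (Fin w [])) + bit (DV U w)) SL).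

Lemma sum_le {A} (f g : A -> nat) (l : list A) :
  (forall a, In a l -> f a <= g a) -> list_sum (map f l) <= list_sum (map g l).
Proof.
  induction l; simpl; intros H; auto. specialize (IHl (fun a b => H a (or_intror b))).
  specialize (H a (or_introl eq_refl)). lia.
Qed.

Lemma sum_eq {A} (f g : A -> nat) (l : list A) :
  (forall a, In a l -> f a <= g a) -> list_sum (map f l) = list_sum (map g l) ->
  forall a, In a l -> f a = g a.
Proof.
  induction l as [|b l IH]; simpl; intros H Heq a Ha; [contradiction|].
  pose proof (sum_le f g l (fun a b => H a (or_intror b))) as Hs.
  pose proof (H b (or_introl eq_refl)).
  destruct Ha as [<-|Ha]; [lia|].
  apply IH; auto. lia.
Qed.

Lemma meas_le {E : graph} SL (V1 V2 : bpath E -> Prop) :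
  subsetX V1 V2 -> meas SL V1 <= meas SL V2.
Proof.
  intro H. apply sum_le. intros w _.
  pose proof (bit_le (in_X (Fin w []) /\ V1 (Fin w [])) (in_X (Fin w []) /\ V2 (Fin w []))
     ltac:(intros [A B]; split; auto)).
  pose proof (bit_le (DV V1 w) (DV V2 w) ltac:(intros HD y Hy Hb; apply H; auto)).
  lia.
Qed.

Lemma meas_eq {E : graph} SL (V1 V2 : bpath E -> Prop) :
  openX V2 -> invariant V1 -> invariant V2 ->
  (forall x, in_X x -> V2 x -> In (bsrc x) SL) ->
  subsetX V1 V2 -> meas SL V1 = meas SL V2 -> subsetX V2 V1.
Proof.
  intros Ho Hi1 Hi2 HS H Heq.
  assert (Hp : forall w, In w SL ->
    bit (in_X (Fin w []) /\ V1 (Fin w [])) + bit (DV V1 w) =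
    bit (in_X (Fin w []) /\ V2 (Fin w [])) + bit (DV V2 w)).
  { apply sum_eq; auto. intros w _.
    pose proof (bit_le (in_X (Fin w []) /\ V1 (Fin w [])) (in_X (Fin w []) /\ V2 (Fin w []))
       ltac:(intros [A B]; split; auto)).
    pose proof (bit_le (DV V1 w) (DV V2 w) ltac:(intros HD y Hy Hb; apply H; auto)).
    lia. }
  apply (key V2 V1 SL Ho Hi2 Hi1 HS).
  - intros w Hw HX HV.
    pose proof (Hp w Hw).
    pose proof (bit_le (in_X (Fin w []) /\ V1 (Fin w [])) (in_X (Fin w []) /\ V2 (Fin w []))
       ltac:(intros [A B]; split; auto)).
    pose proof (bit_le (DV V1 w) (DV V2 w) ltac:(intros HD y Hy Hb; apply H; auto)).
    assert (bit (in_X (Fin w []) /\ V1 (Fin w [])) = bit (in_X (Fin w []) /\ V2 (Fin w []))) by lia.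
    apply (bit_eq _ _ H3); auto.
  - intros w Hw HD.
    pose proof (Hp w Hw).
    pose proof (bit_le (in_X (Fin w []) /\ V1 (Fin w [])) (in_X (Fin w []) /\ V2 (Fin w []))
       ltac:(intros [A B]; split; auto)).
    pose proof (bit_le (DV V1 w) (DV V2 w) ltac:(intros HD' y Hy Hb; apply H; auto)).
    assert (bit (DV V1 w) = bit (DV V2 w)) by lia.
    apply (bit_eq _ _ H3); auto.
Qed.

Lemma nat_stab (k : nat) : forall f : nat -> nat, (forall n, f (S n) <= f n) -> f 0 <= k ->
  exists N, forall n, N <= n -> f n = f N.
Proof.
  induction k as [|k IH]; intros f Hm H0.
  - exists 0. intros n _. assert (forall m, f m <= f 0).
    { induction m; auto. specialize (Hm m). lia. }
    specialize (H n). lia.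
  - assert (Hmon : forall a b, a <= b -> f b <= f a).
    { intros a b Hab; induction Hab; auto. specialize (Hm m). lia. }
    destruct (classic (exists n, f n < f 0)) as [[n Hn]|Hno].
    + destruct (IH (fun i => f (n + i))) as [N HN].
      * intro i. rewrite Nat.add_succ_r. apply Hm.
      * rewrite Nat.add_0_r. lia.
      * exists (n + N). intros m Hm'. replace m with (n + (m - n)) by lia.
        apply HN. lia.
    + exists 0. intros m _. specialize (Hmon 0 m (Nat.le_0_l m)).
      assert (~ f m < f 0) by (intro; apply Hno; eauto). lia.
Qed.

Theorem lemma3p8 (E : graph) :
  (forall U : nat -> bpath E -> Prop,
     (forall n, coi (U n)) ->
     (forall n, subsetX (U (S n)) (U n)) ->
     exists N, forall n, N <= n -> forall x, in_X x -> (U n x <-> U N x))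
  /\
  (forall U : bpath E -> Prop, nonemptyX U -> coi U ->
     exists W, subsetX W U /\ minimal_coi W).
Proof.
  split.
  - intros U HC Hd.
    destruct (cover (U 0) (proj1 (HC 0))) as [SL HS].
    assert (Hsub : forall a b, a <= b -> subsetX (U b) (U a)).
    { intros a b Hab; induction Hab; intros x Hx Hu; auto. apply IHHab; auto. apply Hd; auto. }
    destruct (nat_stab (meas SL (U 0)) (fun n => meas SL (U n))) as [N HN]; auto.
    { intro n. apply meas_le. apply Hd. }
    exists N. intros n Hn x Hx. split.
    + intro H. apply (Hsub N n Hn); auto.
    + revert x Hx. apply (meas_eq SL (U n) (U N)).
      * apply HC.
      * apply HC.
      * apply HC.
      * intros x Hx Hu. apply HS; auto. apply (Hsub 0 N (Nat.le_0_l N)); auto.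
      * apply Hsub; auto.
      * apply HN; auto.
  - intros U Hne HC.
    destruct (cover U (proj1 HC)) as [SL HS].
    set (P := fun W : bpath E -> Prop => nonemptyX W /\ coi W /\ subsetX W U).
    assert (Hmin : forall k W, P W -> meas SL W <= k ->
      exists W0, P W0 /\ forall W', P W' -> meas SL W0 <= meas SL W').
    { induction k as [|k IH]; intros W HW Hk.
      - exists W; split; auto. intros; lia.
      - destruct (classic (exists W', P W' /\ meas SL W' < meas SL W)) as [[W' [HW' Hlt]]|Hno].
        + apply (IH W'); auto. lia.
        + exists W; split; auto. intros W' HW'.
          destruct (Nat.le_gt_cases (meas SL W) (meas SL W')); auto.
          exfalso; eauto. }
    destruct (Hmin _ U (conj Hne (conj HC (fun x _ h => h))) (le_n _)) as [W0 [[Hne0 [HC0 Hs0]] HW0]].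
    exists W0. split; auto. split; auto. split; auto.
    intros W' Hne' HC' Hs'.
    assert (HP' : P W') by (split; auto; split; auto; intros x Hx Hw; apply Hs0; auto).
    specialize (HW0 W' HP').
    pose proof (meas_le SL W' W0 Hs').
    apply (meas_eq SL W' W0);
      [apply HC0|apply HC'|apply HC0|intros x Hx Hw; apply HS; auto; apply Hs0; auto|exact Hs'|lia].
Qed.
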